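(* Let $\Gamma$ be a finite multiset of formulas and $G$ a formula. If the sequent $\Gamma\longrightarrow G$ has an $\mathbf{I}$-proof in which (1) either no $\lor$-L rule is used, or no $\lor$-R and no $\exists$-R rules are used, and (2) either no $\exists$-L rule or no $\exists$-R rule is used, then $\Gamma\longrightarrow G$ has a uniform proof. Moreover, this characterization is tight: for each of the three combinations $\{\lor\text{-L},\exists\text{-R}\}$, $\{\lor\text{-L},\lor\text{-R}\}$, $\{\exists\text{-L},\exists\text{-R}\}$ there is a sequent with an $\mathbf{I}$-proof in which rules of both kinds in that combination are used, but which has no uniform proof.
   Context: Formulas are first-order formulas built from atomic formulas and the logical constants $\top$, $\bot$ (not counted as atomic) using $\land,\lor,\supset,\forall,\exists$; $\neg A$ abbreviates $A\supset\bot$; $B[t/x]$ is capture-avoiding substitution of term $t$ for free $x$ in $B$. A sequent $\Gamma\longrightarrow\Delta$ is a pair of finite multisets of formulas; $B,\Gamma$ denotes $\Gamma$ with an extra occurrence of $B$. A sequent is an axiom if $\top\in\Delta$ or some formula that is $\bot$ or atomic occurs in both $\Gamma$ and $\Delta$. Writing premises $\Rightarrow$ conclusion, the rules are all instances of: contr-L: $B,B,\Gamma\longrightarrow\Delta\Rightarrow B,\Gamma\longrightarrow\Delta$; contr-R: $\Gamma\longrightarrow\Delta,B,B\Rightarrow\Gamma\longrightarrow\Delta,B$; $\bot$-R: $\Gamma\longrightarrow\Delta,\bot\Rightarrow\Gamma\longrightarrow\Delta,D$; $\land$-L: $B,\Gamma\longrightarrow\Delta\Rightarrow B\land D,\Gamma\longrightarrow\Delta$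 and $D,\Gamma\longrightarrow\Delta\Rightarrow B\land D,\Gamma\longrightarrow\Delta$; $\lor$-L: $B,\Gamma\longrightarrow\Delta$ and $D,\Gamma\longrightarrow\Delta\Rightarrow B\lor D,\Gamma\longrightarrow\Delta$; $\land$-R: $\Gamma\longrightarrow\Delta,B$ and $\Gamma\longrightarrow\Delta,D\Rightarrow\Gamma\longrightarrow\Delta,B\land D$; $\lor$-R: $\Gamma\longrightarrow\Delta,B\Rightarrow\Gamma\longrightarrow\Delta,B\lor D$ and $\Gamma\longrightarrow\Delta,D\Rightarrow\Gamma\longrightarrow\Delta,B\lor D$; $\supset$-L: $\Gamma\longrightarrow\Delta,B$ and $D,\Gamma\longrightarrow\Theta\Rightarrow B\supset D,\Gamma\longrightarrow\Delta,\Theta$; $\supset$-R: $B,\Gamma\longrightarrow\Delta,D\Rightarrow\Gamma\longrightarrow\Delta,B\supset D$; $\forall$-L: $B[t/x],\Gamma\longrightarrow\Delta\Rightarrow\forall x B,\Gamma\longrightarrow\Delta$; $\exists$-R: $\Gamma\longrightarrow\Delta,B[t/x]\Rightarrow\Gamma\longrightarrow\Delta,\exists x B$ ($t$ any term); $\exists$-L: $B[c/x],\Gamma\longrightarrow\Delta\Rightarrow\exists x B,\Gamma\longrightarrow\Delta$; $\forall$-R: $\Gamma\longrightarrow\Delta,B[c/x]\Rightarrow\Gamma\longrightarrow\Delta,\forall x B$, where the constant $c$ does not occur in the conclusion. A $\mathbf{C}$-proof is a finite tree of sequents with axioms at the leaves, each internal node being the conclusion of a rule instance whose premises are its children. An $\mathbf{I}$-proof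 is a $\mathbf{C}$-proof in which every sequent has exactly one formula in its succedent. A uniform proof ($\mathbf{O}$-proof) is an $\mathbf{I}$-proof in which any sequent that has a non-atomic formula distinct from $\bot$ in its succedent occurs only as the conclusion of an inference rule that introduces the top-level logical symbol of that formula. A rule ''is used'' if some instance of that schema occurs in the proof. *)

(* Defs.v *)
From Stdlib Require Import List Permutation Arith.
Import ListNotations.

(* ---------- Terms and formulas (locally nameless) ----------
   Bound variables are de Bruijn indices [TVar n]; free individual symbols
   (constants, function symbols) are [TFun f args]; a constant is [TFun c []]. *)
Inductive term : Type :=
| TVar : nat -> term
| TFun : nat -> list term -> term.

Inductive form : Type :=
| Atom : nat -> list term -> form
| Top : form
| Bot : form
| And : form -> form -> form
| Or : form -> form -> form
| Imp : form -> form -> form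
| All : form -> form      (* binds de Bruijn index 0 *)
| Ex : form -> form.

Definition Neg (A : form) : form := Imp A Bot.

Definition is_atom (A : form) : Prop :=
  match A with Atom _ _ => True | _ => False end.

Fixpoint closed_term (u : term) : Prop :=
  match u with
  | TVar _ => False
  | TFun _ l => fold_right and True (map closed_term l)
  end.

Fixpoint lc_term (k : nat) (u : term) : Prop :=
  match u with
  | TVar n => n < k
  | TFun _ l => fold_right and True (map (lc_term k) l)
  end.

Fixpoint lc_form (k : nat) (A : form) : Prop :=
  match A with
  | Atom _ l => fold_right and True (map (lc_term k) l)
  | Top | Bot => True
  | And B D | Or B D | Imp B D => lc_form k B /\ lc_form k D
  | All B | Ex B => lc_form (S k) B
  end.

Definition wf_form (A : form) : Prop := lc_form 0 A.

Fixpoint open_term (k : nat) (t : term) (u : term) : term :=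
  match u with
  | TVar n => if Nat.eqb n k then t else TVar n
  | TFun f l => TFun f (map (open_term k t) l)
  end.

Fixpoint open_form (k : nat) (t : term) (A : form) : form :=
  match A with
  | Atom p l => Atom p (map (open_term k t) l)
  | Top => Top
  | Bot => Bot
  | And B D => And (open_form k t B) (open_form k t D)
  | Or B D => Or (open_form k t B) (open_form k t D)
  | Imp B D => Imp (open_form k t B) (open_form k t D)
  | All B => All (open_form (S k) t B)
  | Ex B => Ex (open_form (S k) t B)
  end.

Definition inst (B : form) (t : term) : form := open_form 0 t B.

Fixpoint occ_term (c : nat) (u : term) : Prop :=
  match u with
  | TVar _ => False
  | TFun f l => f = c \/ fold_right or False (map (occ_term c) l)
  end.

Fixpoint occ_form (c : nat) (A : form) : Prop :=
  match A with
  | Atom _ l => fold_right or False (map (occ_term c) l)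
  | Top | Bot => False
  | And B D | Or B D | Imp B D => occ_form c B \/ occ_form c D
  | All B | Ex B => occ_form c B
  end.

(* ---------- Sequents (pairs of finite multisets, as lists up to permutation) ---------- *)
Definition sequent : Type := (list form * list form)%type.

Definition seq_eq (s1 s2 : sequent) : Prop :=
  Permutation (fst s1) (fst s2) /\ Permutation (snd s1) (snd s2).

Definition occ_seq (c : nat) (s : sequent) : Prop :=
  Exists (occ_form c) (fst s) \/ Exists (occ_form c) (snd s).

Definition axiom (s : sequent) : Prop :=
  In Top (snd s) \/
  exists A, (A = Bot \/ is_atom A) /\ In A (fst s) /\ In A (snd s).

Inductive rule_kind : Type :=
| RContrL | RContrR | RBotR | RAndL | ROrL | RAndR | ROrR
| RImpL | RImpR | RAllL | RExR | RExL | RAllR.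

Definition step1 (k : rule_kind) (p c : sequent) : Prop :=
  match k with
  | RContrL => exists B G D, seq_eq p (B :: B :: G, D) /\ seq_eq c (B :: G, D)
  | RContrR => exists B G D, seq_eq p (G, B :: B :: D) /\ seq_eq c (G, B :: D)
  | RBotR => exists E G D, seq_eq p (G, Bot :: D) /\ seq_eq c (G, E :: D)
  | RAndL => exists B E G D,
      (seq_eq p (B :: G, D) \/ seq_eq p (E :: G, D)) /\ seq_eq c (And B E :: G, D)
  | ROrR => exists B E G D,
      (seq_eq p (G, B :: D) \/ seq_eq p (G, E :: D)) /\ seq_eq c (G, Or B E :: D)
  | RImpR => exists B E G D,
      seq_eq p (B :: G, E :: D) /\ seq_eq c (G, Imp B E :: D)
  | RAllL => exists B t G D, closed_term t /\
      seq_eq p (inst B t :: G, D) /\ seq_eq c (All B :: G, D)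
  | RExR => exists B t G D, closed_term t /\
      seq_eq p (G, inst B t :: D) /\ seq_eq c (G, Ex B :: D)
  | RExL => exists B cst G D, ~ occ_seq cst c /\
      seq_eq p (inst B (TFun cst []) :: G, D) /\ seq_eq c (Ex B :: G, D)
  | RAllR => exists B cst G D, ~ occ_seq cst c /\
      seq_eq p (G, inst B (TFun cst []) :: D) /\ seq_eq c (G, All B :: D)
  | _ => False
  end.

Definition step2 (k : rule_kind) (p1 p2 c : sequent) : Prop :=
  match k with
  | ROrL => exists B E G D,
      seq_eq p1 (B :: G, D) /\ seq_eq p2 (E :: G, D) /\ seq_eq c (Or B E :: G, D)
  | RAndR => exists B E G D,
      seq_eq p1 (G, B :: D) /\ seq_eq p2 (G, E :: D) /\ seq_eq c (G, And B E :: D)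
  | RImpL => exists B E G D T,
      seq_eq p1 (G, B :: D) /\ seq_eq p2 (E :: G, T) /\ seq_eq c (Imp B E :: G, D ++ T)
  | _ => False
  end.

Inductive ptree : Type :=
| Leaf : sequent -> ptree
| Un : rule_kind -> sequent -> ptree -> ptree
| Bin : rule_kind -> sequent -> ptree -> ptree -> ptree.

Definition root (p : ptree) : sequent :=
  match p with Leaf s => s | Un _ s _ => s | Bin _ s _ _ => s end.

Fixpoint C_proof (p : ptree) : Prop :=
  match p with
  | Leaf s => axiom s
  | Un k s q => step1 k (root q) s /\ C_proof q
  | Bin k s q1 q2 => step2 k (root q1) (root q2) s /\ C_proof q1 /\ C_proof q2
  end.

Fixpoint all_seqs (P : sequent -> Prop) (p : ptree) : Prop :=
  match p with
  | Leaf s => P s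
  | Un _ s q => P s /\ all_seqs P q
  | Bin _ s q1 q2 => P s /\ all_seqs P q1 /\ all_seqs P q2
  end.

Definition single_succ (s : sequent) : Prop := exists F, snd s = [F].

Definition I_proof (p : ptree) : Prop := C_proof p /\ all_seqs single_succ p.

(* uniformity condition at a node whose last rule is [r] (None for an axiom leaf):
   a non-atomic succedent formula distinct from Bot must be introduced by the rule
   for its top-level symbol (for Top, the only introduction is the axiom). *)
Definition uniform_ok (r : option rule_kind) (s : sequent) : Prop :=
  match snd s with
  | [F] =>
      match F with
      | Top => r = None
      | And _ _ => r = Some RAndR
      | Or _ _ => r = Some ROrR
      | Imp _ _ => r = Some RImpR
      | All _ => r = Some RAllR
      | Ex _ => r = Some RExR
      | _ => True
      end
  | _ => True
  end.

Fixpoint uniform_nodes (p : ptree) : Prop :=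
  match p with
  | Leaf s => uniform_ok None s
  | Un k s q => uniform_ok (Some k) s /\ uniform_nodes q
  | Bin k s q1 q2 => uniform_ok (Some k) s /\ uniform_nodes q1 /\ uniform_nodes q2
  end.

Definition O_proof (p : ptree) : Prop := I_proof p /\ uniform_nodes p.

Fixpoint uses (k : rule_kind) (p : ptree) : Prop :=
  match p with
  | Leaf _ => False
  | Un k' _ q => k' = k \/ uses k q
  | Bin k' _ q1 q2 => k' = k \/ uses k q1 \/ uses k q2
  end.

Definition has_I_proof_using (Gam : list form) (G : form) (k1 k2 : rule_kind) : Prop :=
  exists p, I_proof p /\ root p = (Gam, [G]) /\ uses k1 p /\ uses k2 p.

Definition has_uniform_proof (Gam : list form) (G : form) : Prop :=
  exists p, O_proof p /\ root p = (Gam, [G]).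

Definition tight_witness (k1 k2 : rule_kind) : Prop :=
  exists (Gam : list form) (G : form),
    Forall wf_form Gam /\ wf_form G /\
    has_I_proof_using Gam G k1 k2 /\ ~ has_uniform_proof Gam G.

(* Main.v *)
Require Import Defs.
From Stdlib Require Import List Permutation Arith Lia Wf_nat Classical.
Import ListNotations.


Fixpoint term_ind' (P : term -> Prop) (HV : forall n, P (TVar n))
  (HF : forall f l, Forall P l -> P (TFun f l)) (u : term) {struct u} : P u :=
  match u with
  | TVar n => HV n
  | TFun f l => HF f l ((fix go (l : list term) : Forall P l :=
       match l with
       | [] => Forall_nil P
       | x :: r => @Forall_cons _ P x r (term_ind' P HV HF x) (go r)
       end) l)
  end.

Lemma fr_and {A} (P : A -> Prop) l : fold_right and True (map P l) <-> Forall P l.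
Proof. induction l; simpl; split; intros H; auto.
  - destruct H; constructor; tauto.
  - inversion H; subst; tauto.
Qed.

Lemma fr_or {A} (P : A -> Prop) l : fold_right or False (map P l) <-> Exists P l.
Proof. induction l; simpl; split; intros H.
  - destruct H.
  - inversion H.
  - destruct H; [constructor 1|constructor 2]; tauto.
  - inversion H; subst; tauto.
Qed.

Definition cst (x : nat) : term := TFun x [].

Fixpoint fsize (A : form) : nat :=
  match A with
  | And B E | Or B E | Imp B E => S (fsize B + fsize E)
  | All B | Ex B => S (fsize B)
  | _ => 1
  end.

Lemma fsize_open A : forall k t, fsize (open_form k t A) = fsize A.
Proof. induction A; intros; simpl; auto. Qed.

Lemma fsize_inst B t : fsize (inst B t) = fsize B.
Proof. apply fsize_open. Qed.

Definition ab (A : form) : Prop := A = Bot \/ is_atom A.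

Definition sw (c d x : nat) : nat :=
  if Nat.eqb x c then d else if Nat.eqb x d then c else x.

Lemma sw_inv c d x : sw c d (sw c d x) = x.
Proof. unfold sw.
  destruct (Nat.eqb_spec x c); [|destruct (Nat.eqb_spec x d)];
  repeat match goal with |- context[Nat.eqb ?a ?b] => destruct (Nat.eqb_spec a b) end; lia.
Qed.

Lemma sw_eq c d x y : sw c d x = y <-> x = sw c d y.
Proof. split; intro H; subst; rewrite sw_inv; auto. Qed.

Lemma sw_id c d x : x <> c -> x <> d -> sw c d x = x.
Proof. unfold sw; intros; destruct (Nat.eqb_spec x c); destruct (Nat.eqb_spec x d); lia. Qed.

Lemma sw_c c d : sw c d c = d.
Proof. unfold sw; rewrite Nat.eqb_refl; auto. Qed.

Fixpoint swt (c d : nat) (u : term) : term :=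
  match u with
  | TVar n => TVar n
  | TFun f l => TFun (sw c d f) (map (swt c d) l)
  end.

Fixpoint swf (c d : nat) (A : form) : form :=
  match A with
  | Atom p l => Atom p (map (swt c d) l)
  | Top => Top
  | Bot => Bot
  | And B E => And (swf c d B) (swf c d E)
  | Or B E => Or (swf c d B) (swf c d E)
  | Imp B E => Imp (swf c d B) (swf c d E)
  | All B => All (swf c d B)
  | Ex B => Ex (swf c d B)
  end.

Lemma swt_open c d k t u : swt c d (open_term k t u) = open_term k (swt c d t) (swt c d u).
Proof.
  induction u using term_ind'; simpl.
  - destruct (Nat.eqb n k); auto.
  - f_equal. rewrite !map_map. apply map_ext_in. intros a Ha.
    rewrite Forall_forall in H. auto.
Qed.

Lemma swf_open c d A : forall k t, swf c d (open_form k t A) = open_form k (swt c d t) (swf c d A).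
Proof.
  induction A; intros; simpl; f_equal; auto.
  rewrite !map_map. apply map_ext. intros; apply swt_open.
Qed.

Lemma swf_inst c d B t : swf c d (inst B t) = inst (swf c d B) (swt c d t).
Proof. apply swf_open. Qed.

Lemma swt_cst c d x : swt c d (cst x) = cst (sw c d x).
Proof. reflexivity. Qed.

Lemma closed_swt c d t : closed_term t -> closed_term (swt c d t).
Proof.
  induction t using term_ind'; simpl; auto.
  rewrite !fr_and, Forall_map. intro H1. rewrite Forall_forall in *. auto.
Qed.

Lemma occ_swt c d x u : occ_term x (swt c d u) <-> occ_term (sw c d x) u.
Proof.
  induction u using term_ind'; simpl; try tauto.
  rewrite !fr_or, Exists_map, sw_eq.
  rewrite Forall_forall in H.
  split; intros [H1|H1]; auto; right; rewrite Exists_exists in *;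
  destruct H1 as [y [Hy1 Hy2]]; exists y; split; auto; apply H; auto.
Qed.

Lemma occ_swf c d x A : occ_form x (swf c d A) <-> occ_form (sw c d x) A.
Proof.
  induction A; simpl; try tauto.
  rewrite !fr_or, Exists_map. split; intro H1; rewrite Exists_exists in *;
  destruct H1 as [y [Hy1 Hy2]]; exists y; split; auto; apply occ_swt; auto.
Qed.

Lemma swt_id c d u : ~ occ_term c u -> ~ occ_term d u -> swt c d u = u.
Proof.
  induction u using term_ind'; simpl; auto.
  rewrite !fr_or. intros H1 H2. f_equal.
  - apply sw_id; auto.
  - rewrite <- map_id. apply map_ext_in. intros a Ha. rewrite Forall_forall in H.
    apply H; auto; intro; [apply H1|apply H2]; right; rewrite Exists_exists; eauto.
Qed.

Lemma swf_id c d A : ~ occ_form c A -> ~ occ_form d A -> swf c d A = A.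
Proof.
  induction A; simpl; intros; f_equal; try tauto.
  rewrite fr_or in *. rewrite <- map_id. apply map_ext_in. intros a Ha.
  apply swt_id; intro; [apply H|apply H0]; rewrite Exists_exists; eauto.
Qed.

Lemma swl_id c d (l : list form) : (forall A, In A l -> ~ occ_form c A /\ ~ occ_form d A) ->
  map (swf c d) l = l.
Proof.
  induction l; simpl; intros; auto. f_equal.
  - destruct (H a); auto. apply swf_id; auto.
  - apply IHl; auto.
Qed.

Lemma swf_ab c d A : ab A -> ab (swf c d A).
Proof. unfold ab; destruct A; simpl; intuition discriminate. Qed.

Lemma swf_swf c d A : swf c d (swf c d A) = A.
Proof.
  assert (Ht : forall u, swt c d (swt c d u) = u).
  { induction u using term_ind'; simpl; auto. rewrite sw_inv, map_map. f_equal.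
    transitivity (map (fun x => x) l); [|apply map_id]. apply map_ext_in. rewrite Forall_forall in H. auto. }
  induction A; simpl; f_equal; auto.
  rewrite map_map. transitivity (map (fun x => x) l); [|apply map_id]. apply map_ext. auto.
Qed.

Fixpoint bdt (u : term) : nat :=
  match u with
  | TVar _ => 0
  | TFun f l => fold_right (fun v acc => Nat.max (bdt v) acc) (S f) l
  end.

Fixpoint bdf (A : form) : nat :=
  match A with
  | Atom _ l => fold_right (fun v acc => Nat.max (bdt v) acc) 0 l
  | Top | Bot => 0
  | And B E | Or B E | Imp B E => Nat.max (bdf B) (bdf E)
  | All B | Ex B => bdf B
  end.

Fixpoint bdl (l : list form) : nat :=
  match l with [] => 0 | A :: r => Nat.max (bdf A) (bdl r) end.

Lemma fold_max_ge (l : list term) b v : In v l -> bdt v <= fold_right (fun v acc => Nat.max (bdt v) acc) b l.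
Proof. induction l; simpl; intros H; [destruct H|]. destruct H; subst; [lia|]. specialize (IHl H); lia. Qed.
Lemma fold_max_b (l : list term) b : b <= fold_right (fun v acc => Nat.max (bdt v) acc) b l.
Proof. induction l; simpl; lia. Qed.

Lemma occ_bdt x u : occ_term x u -> x < bdt u.
Proof.
  induction u using term_ind'; simpl; [tauto|].
  rewrite fr_or, Exists_exists. intros [H1|[v [Hv1 Hv2]]].
  - subst. pose proof (fold_max_b l (S x)). lia.
  - rewrite Forall_forall in H. specialize (H v Hv1 Hv2). pose proof (fold_max_ge l (S f) v Hv1). lia.
Qed.

Lemma occ_bdf x A : occ_form x A -> x < bdf A.
Proof.
  induction A; simpl; try tauto; try (intros [H|H]; [apply IHA1 in H|apply IHA2 in H]; lia).
  rewrite fr_or, Exists_exists. intros [v [Hv1 Hv2]]. apply occ_bdt in Hv2.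
  pose proof (fold_max_ge l 0 v Hv1). lia.
Qed.

Lemma occ_bdl x l A : In A l -> occ_form x A -> x < bdl l.
Proof. induction l; simpl; intros H1 H2; [destruct H1|]. destruct H1; subst.
  - apply occ_bdf in H2; lia.
  - specialize (IHl H H2); lia.
Qed.

Lemma occ_open_t x k t u : occ_term x (open_term k t u) -> occ_term x u \/ occ_term x t.
Proof.
  induction u using term_ind'; simpl.
  - destruct (Nat.eqb n k); simpl; auto.
  - rewrite !fr_or, Exists_map, !Exists_exists. intros [H1|[v [Hv1 Hv2]]]; auto.
    rewrite Forall_forall in H. destruct (H v Hv1 Hv2); auto. left; right; eauto.
Qed.

Lemma occ_open x A : forall k t, occ_form x (open_form k t A) -> occ_form x A \/ occ_term x t.
Proof.
  induction A; simpl; intros k t; try tauto.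
  - rewrite !fr_or, Exists_map, !Exists_exists. intros [v [Hv1 Hv2]].
    destruct (occ_open_t _ _ _ _ Hv2); eauto.
  - intros [H|H]; [destruct (IHA1 _ _ H)|destruct (IHA2 _ _ H)]; tauto.
  - intros [H|H]; [destruct (IHA1 _ _ H)|destruct (IHA2 _ _ H)]; tauto.
  - intros [H|H]; [destruct (IHA1 _ _ H)|destruct (IHA2 _ _ H)]; tauto.
  - apply IHA.
  - apply IHA.
Qed.

Lemma occ_inst_cst x B y : occ_form x (inst B (cst y)) -> occ_form x B \/ x = y.
Proof. intro H. destruct (occ_open _ _ _ _ H) as [H1|H1]; auto. simpl in H1. destruct H1 as [H1|[]]; auto. Qed.

Lemma occ_inst_back x B t : occ_form x B -> occ_form x (inst B t).
Proof.
  unfold inst. generalize 0. induction B; simpl; intros k; auto; try tauto.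
  assert (Ht : forall u, occ_term x u -> occ_term x (open_term k t u)).
  { induction u using term_ind'; simpl; [tauto|]. rewrite !fr_or, Exists_map, !Exists_exists.
    intros [H1|[v [Hv1 Hv2]]]; auto. right. exists v; split; auto. rewrite Forall_forall in H; auto. }
  rewrite !fr_or, Exists_map, !Exists_exists. intros [v [Hv1 Hv2]]; eauto.
  all: intros [H|H]; [left|right]; eauto.
Qed.


Inductive U (orr exr bg : bool) : list form -> form -> Prop :=
| U_top Gm : U orr exr bg Gm Top
| U_ax Gm A : ab A -> In A Gm -> U orr exr bg Gm A
| U_bot Gm A : (bg = true \/ ab A) -> U orr exr bg Gm Bot -> U orr exr bg Gm A
| U_andR Gm A B : U orr exr bg Gm A -> U orr exr bg Gm B -> U orr exr bg Gm (And A B)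
| U_orR1 Gm A B : orr = true -> U orr exr bg Gm A -> U orr exr bg Gm (Or A B)
| U_orR2 Gm A B : orr = true -> U orr exr bg Gm B -> U orr exr bg Gm (Or A B)
| U_impR Gm A B : U orr exr bg (A :: Gm) B -> U orr exr bg Gm (Imp A B)
| U_allR Gm B L : (forall x, ~ In x L -> U orr exr bg Gm (inst B (cst x))) -> U orr exr bg Gm (All B)
| U_exR Gm B t : exr = true -> closed_term t -> U orr exr bg Gm (inst B t) -> U orr exr bg Gm (Ex B)
| U_andL1 Gm A B G : ab G -> U orr exr bg (A :: Gm) G -> U orr exr bg (And A B :: Gm) G
| U_andL2 Gm A B G : ab G -> U orr exr bg (B :: Gm) G -> U orr exr bg (And A B :: Gm) G
| U_orL Gm A B G : ab G -> U orr exr bg (A :: Gm) G -> U orr exr bg (B :: Gm) G -> U orr exr bg (Or A B :: Gm) G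
| U_impL Gm A B G : ab G -> U orr exr bg Gm A -> U orr exr bg (B :: Gm) G -> U orr exr bg (Imp A B :: Gm) G
| U_allL Gm B t G : ab G -> closed_term t -> U orr exr bg (inst B t :: Gm) G -> U orr exr bg (All B :: Gm) G
| U_exL Gm B L G : ab G -> (forall x, ~ In x L -> U orr exr bg (inst B (cst x) :: Gm) G) -> U orr exr bg (Ex B :: Gm) G
| U_contr Gm A G : ab G -> U orr exr bg (A :: A :: Gm) G -> U orr exr bg (A :: Gm) G
| U_perm Gm Gm' G : U orr exr bg Gm G -> Permutation Gm Gm' -> U orr exr bg Gm' G.

Lemma U_weak o e b Gm G : U o e b Gm G -> forall A, U o e b (A :: Gm) G.
Proof.
  induction 1; intros X.
  - apply U_top.
  - apply U_ax; simpl; auto.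
  - apply U_bot; auto.
  - apply U_andR; auto.
  - apply U_orR1; auto.
  - apply U_orR2; auto.
  - apply U_impR. eapply U_perm; [apply IHU|]. apply perm_swap.
  - eapply U_allR; eauto.
  - eapply U_exR; eauto.
  - eapply U_perm; [apply U_andL1; [auto|]; eapply U_perm; [apply (IHU X)|apply perm_swap]|apply perm_swap].
  - eapply U_perm; [apply U_andL2; [auto|]; eapply U_perm; [apply (IHU X)|apply perm_swap]|apply perm_swap].
  - eapply U_perm; [apply U_orL; [auto| eapply U_perm; [apply (IHU1 X)|apply perm_swap] | eapply U_perm; [apply (IHU2 X)|apply perm_swap]]|apply perm_swap].
  - eapply U_perm; [apply U_impL; [auto| apply (IHU1 X) | eapply U_perm; [apply (IHU2 X)|apply perm_swap]]|apply perm_swap].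
  - eapply U_perm; [eapply U_allL; [auto|eauto|]; eapply U_perm; [apply (IHU X)|apply perm_swap]|apply perm_swap].
  - eapply U_perm; [eapply U_exL; [auto|]; intros x Hx; eapply U_perm; [apply (H1 x Hx X)|apply perm_swap]|apply perm_swap].
  - eapply U_perm; [apply U_contr; [auto|]; eapply U_perm; [apply (IHU X)|]|apply perm_swap].
    eapply perm_trans; [apply perm_swap|]. apply perm_skip. apply perm_swap.
  - eapply U_perm; [apply (IHU X)|]. apply perm_skip; auto.
Qed.

Lemma U_swap o e b c d Gm G : U o e b Gm G -> U o e b (map (swf c d) Gm) (swf c d G).
Proof.
  induction 1; simpl.
  - apply U_top.
  - apply U_ax; [apply swf_ab; auto| apply in_map; auto].
  - apply U_bot; [destruct H; auto; right; apply swf_ab; auto|auto].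
  - apply U_andR; auto.
  - apply U_orR1; auto.
  - apply U_orR2; auto.
  - apply U_impR; auto.
  - apply U_allR with (L := map (sw c d) L). intros x Hx.
    assert (Hx' : ~ In (sw c d x) L).
    { intro Hin; apply Hx. rewrite <- (sw_inv c d x). apply in_map; auto. }
    specialize (H0 _ Hx'). rewrite swf_inst, swt_cst, sw_inv in H0. auto.
  - apply U_exR with (t := swt c d t); auto. apply closed_swt; auto. rewrite <- swf_inst; auto.
  - apply U_andL1; [apply swf_ab|]; auto.
  - apply U_andL2; [apply swf_ab|]; auto.
  - apply U_orL; [apply swf_ab| |]; auto.
  - apply U_impL; [apply swf_ab| |]; auto.
  - apply U_allL with (t := swt c d t); [apply swf_ab|apply closed_swt|]; auto. rewrite <- swf_inst; auto.
  - apply U_exL with (L := map (sw c d) L); [apply swf_ab; auto|]. intros x Hx.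
    assert (Hx' : ~ In (sw c d x) L).
    { intro Hin; apply Hx. rewrite <- (sw_inv c d x). apply in_map; auto. }
    specialize (H1 _ Hx'). simpl in H1. rewrite swf_inst, swt_cst, sw_inv in H1. auto.
  - apply U_contr; [apply swf_ab|]; auto.
  - eapply U_perm; eauto. apply Permutation_map; auto.
Qed.

Lemma U_rename o e b c x Gm B G :
  U o e b (inst B (cst c) :: Gm) G ->
  ~ occ_form c B -> ~ occ_form x B -> ~ occ_form c G -> ~ occ_form x G ->
  (forall A, In A Gm -> ~ occ_form c A /\ ~ occ_form x A) ->
  U o e b (inst B (cst x) :: Gm) G.
Proof.
  intros H H1 H2 H3 H4 H5. apply (U_swap o e b c x) in H. simpl in H.
  rewrite swf_inst, swt_cst, sw_c, swl_id, !swf_id in H; auto.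
Qed.

Lemma U_rename_r o e b c x Gm B :
  U o e b Gm (inst B (cst c)) ->
  ~ occ_form c B -> ~ occ_form x B ->
  (forall A, In A Gm -> ~ occ_form c A /\ ~ occ_form x A) ->
  U o e b Gm (inst B (cst x)).
Proof.
  intros H H1 H2 H5. apply (U_swap o e b c x) in H.
  rewrite swf_inst, swt_cst, sw_c, swl_id, !swf_id in H; auto.
Qed.


Ltac nab := match goal with H : ab _ |- _ =>
  let H' := fresh in destruct H as [H'|H']; [discriminate H'|simpl in H'; contradiction] end.

Lemma inv_and o e Gm A B : U o e true Gm (And A B) -> U o e true Gm A /\ U o e true Gm B.
Proof.
  intro H; remember (And A B) as G; revert A B HeqG; induction H; intros; subst;
    try discriminate; try nab.
  - split; apply U_bot; auto.
  - injection HeqG; intros; subst; auto.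
  - destruct (IHU _ _ eq_refl); split; eapply U_perm; eauto.
Qed.

Lemma inv_imp o e Gm A B : U o e true Gm (Imp A B) -> U o e true (A :: Gm) B.
Proof.
  intro H; remember (Imp A B) as G; revert A B HeqG; induction H; intros; subst;
    try discriminate; try nab.
  - apply U_bot; auto. apply U_weak; auto.
  - injection HeqG; intros; subst; auto.
  - eapply U_perm; [apply IHU; auto|]. apply perm_skip; auto.
Qed.

Lemma inv_all o e Gm B : U o e true Gm (All B) ->
  exists L, forall x, ~ In x L -> U o e true Gm (inst B (cst x)).
Proof.
  intro H; remember (All B) as G; revert B HeqG; induction H; intros; subst;
    try discriminate; try nab.
  - exists []. intros; apply U_bot; auto.
  - injection HeqG; intros; subst; eauto.
  - destruct (IHU _ eq_refl) as [L HL]. exists L; intros; eapply U_perm; eauto.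
Qed.

Lemma inv_or o e Gm A B : U o e true Gm (Or A B) ->
  U o e true Gm Bot \/ (o = true /\ (U o e true Gm A \/ U o e true Gm B)).
Proof.
  intro H; remember (Or A B) as G; revert A B HeqG; induction H; intros; subst;
    try discriminate; try nab.
  - auto.
  - injection HeqG; intros; subst; auto.
  - injection HeqG; intros; subst; auto.
  - destruct (IHU _ _ eq_refl) as [H1|[H1 [H2|H2]]]; [left|right;split;auto;left|right;split;auto;right];
      eapply U_perm; eauto.
Qed.

Lemma inv_ex o e Gm B : U o e true Gm (Ex B) ->
  U o e true Gm Bot \/ (e = true /\ exists t, closed_term t /\ U o e true Gm (inst B t)).
Proof.
  intro H; remember (Ex B) as G; revert B HeqG; induction H; intros; subst;
    try discriminate; try nab.
  - auto.
  - injection HeqG; intros; subst; eauto.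
  - destruct (IHU _ eq_refl) as [H1|[H1 [t [H2 H3]]]]; [left|right;split;auto;exists t;split;auto];
      eapply U_perm; eauto.
Qed.

Lemma size_ind (P : form -> Prop) :
  (forall G, (forall G', fsize G' < fsize G -> P G') -> P G) -> forall G, P G.
Proof.
  intros H G. induction G as [G IH] using (induction_ltof1 form fsize).
  apply H. intros; apply IH; auto.
Qed.

Lemma push o e (X : form) (Pr : list form -> form -> Prop)
 (Hab : forall Gm G, ab G -> Pr Gm G -> U o e true (X :: Gm) G)
 (Hand : forall Gm A B, Pr Gm (And A B) -> Pr Gm A /\ Pr Gm B)
 (Himp : forall Gm A B, Pr Gm (Imp A B) -> Pr (A :: Gm) B)
 (Hall : forall Gm B, Pr Gm (All B) -> exists L, forall x, ~ In x L -> Pr Gm (inst B (cst x)))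
 (Hor : forall Gm A B, Pr Gm (Or A B) -> Pr Gm Bot \/ (o = true /\ (Pr Gm A \/ Pr Gm B)))
 (Hex : forall Gm B, Pr Gm (Ex B) ->
    Pr Gm Bot \/ (e = true /\ exists t, closed_term t /\ Pr Gm (inst B t))) :
 forall G Gm, Pr Gm G -> U o e true (X :: Gm) G.
Proof.
  induction G as [G IH] using size_ind. intros Gm HP.
  destruct G.
  - apply Hab; auto. right; simpl; auto.
  - apply U_top.
  - apply Hab; auto. left; auto.
  - destruct (Hand _ _ _ HP). apply U_andR; apply IH; simpl; auto; lia.
  - destruct (Hor _ _ _ HP) as [H1|[H1 [H2|H2]]].
    + apply U_bot; auto. apply Hab; auto. left; auto.
    + apply U_orR1; auto. apply IH; simpl; auto; lia.
    + apply U_orR2; auto. apply IH; simpl; auto; lia.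
  - apply U_impR. eapply U_perm; [apply IH; [|apply Himp; eauto]|apply perm_swap]. simpl; lia.
  - destruct (Hall _ _ HP) as [L HL]. apply U_allR with L. intros x Hx.
    apply IH; auto. rewrite fsize_inst; simpl; lia.
  - destruct (Hex _ _ HP) as [H1|[H1 [t [H2 H3]]]].
    + apply U_bot; auto. apply Hab; auto. left; auto.
    + apply U_exR with t; auto. apply IH; auto. rewrite fsize_inst; simpl; lia.
Qed.

Lemma perm3 (A B C : form) l : Permutation (A :: B :: C :: l) (C :: A :: B :: l).
Proof.
  eapply perm_trans; [apply perm_skip; apply perm_swap|]. apply perm_swap.
Qed.

Lemma contr_adm o e A : forall G Gm, U o e true (A :: A :: Gm) G -> U o e true (A :: Gm) G.
Proof.
  apply push with (Pr := fun Gm G => U o e true (A :: A :: Gm) G).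
  - intros; apply U_contr; auto.
  - intros; apply inv_and; auto.
  - intros Gm G1 G2 H. apply inv_imp in H. eapply U_perm; [apply H|]. apply Permutation_sym, perm3.
  - intros; apply inv_all; auto.
  - intros; apply inv_or; auto.
  - intros; apply inv_ex; auto.
Qed.

Lemma andL1_adm o e A B : forall G Gm, U o e true (A :: Gm) G -> U o e true (And A B :: Gm) G.
Proof.
  apply push with (Pr := fun Gm G => U o e true (A :: Gm) G).
  - intros; apply U_andL1; auto.
  - intros; apply inv_and; auto.
  - intros Gm G1 G2 H. apply inv_imp in H. eapply U_perm; [apply H|]. apply perm_swap.
  - intros; apply inv_all; auto.
  - intros; apply inv_or; auto.
  - intros; apply inv_ex; auto.
Qed.

Lemma andL2_adm o e A B : forall G Gm, U o e true (B :: Gm) G -> U o e true (And A B :: Gm) G.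
Proof.
  apply push with (Pr := fun Gm G => U o e true (B :: Gm) G).
  - intros; apply U_andL2; auto.
  - intros; apply inv_and; auto.
  - intros Gm G1 G2 H. apply inv_imp in H. eapply U_perm; [apply H|]. apply perm_swap.
  - intros; apply inv_all; auto.
  - intros; apply inv_or; auto.
  - intros; apply inv_ex; auto.
Qed.

Lemma allL_adm o e B t : closed_term t -> forall G Gm, U o e true (inst B t :: Gm) G -> U o e true (All B :: Gm) G.
Proof.
  intro Ht.
  apply push with (Pr := fun Gm G => U o e true (inst B t :: Gm) G).
  - intros; eapply U_allL; eauto.
  - intros; apply inv_and; auto.
  - intros Gm G1 G2 H. apply inv_imp in H. eapply U_perm; [apply H|]. apply perm_swap.
  - intros; apply inv_all; auto.
  - intros; apply inv_or; auto.
  - intros; apply inv_ex; auto.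
Qed.

Lemma impL_adm o e A B : forall G Gm, U o e true Gm A /\ U o e true (B :: Gm) G -> U o e true (Imp A B :: Gm) G.
Proof.
  apply push with (Pr := fun Gm G => U o e true Gm A /\ U o e true (B :: Gm) G).
  - intros Gm G H [H1 H2]; apply U_impL; auto.
  - intros Gm G1 G2 [H1 H2]. apply inv_and in H2; tauto.
  - intros Gm G1 G2 [H1 H2]. apply inv_imp in H2. split; [apply U_weak; auto|].
    eapply U_perm; [apply H2|]. apply perm_swap.
  - intros Gm G [H1 H2]. apply inv_all in H2. destruct H2 as [L HL]. exists L; auto.
  - intros Gm G1 G2 [H1 H2]. apply inv_or in H2. tauto.
  - intros Gm G [H1 H2]. apply inv_ex in H2. destruct H2 as [H2|[H2 [t [H3 H4]]]]; auto.
    right; split; auto; exists t; auto.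
Qed.

Lemma orL_adm A B : forall G Gm, U false false true (A :: Gm) G /\ U false false true (B :: Gm) G ->
  U false false true (Or A B :: Gm) G.
Proof.
  apply push with (Pr := fun Gm G => U false false true (A :: Gm) G /\ U false false true (B :: Gm) G).
  - intros Gm G H [H1 H2]; apply U_orL; auto.
  - intros Gm G1 G2 [H1 H2]. apply inv_and in H1; apply inv_and in H2; tauto.
  - intros Gm G1 G2 [H1 H2]. apply inv_imp in H1; apply inv_imp in H2.
    split; [eapply U_perm; [apply H1|apply perm_swap]|eapply U_perm; [apply H2|apply perm_swap]].
  - intros Gm G [H1 H2]. apply inv_all in H1; apply inv_all in H2.
    destruct H1 as [L1 HL1]; destruct H2 as [L2 HL2]. exists (L1 ++ L2).
    intros x Hx; split; [apply HL1|apply HL2]; intro; apply Hx; apply in_or_app; auto.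
  - intros Gm G1 G2 [H1 H2]. apply inv_or in H1; apply inv_or in H2.
    left; split; [destruct H1 as [H1|[H1 _]]|destruct H2 as [H2|[H2 _]]]; auto; discriminate.
  - intros Gm G [H1 H2]. apply inv_ex in H1; apply inv_ex in H2.
    left; split; [destruct H1 as [H1|[H1 _]]|destruct H2 as [H2|[H2 _]]]; auto; discriminate.
Qed.

Definition fresh_in (c : nat) (Gm : list form) : Prop := forall A, In A Gm -> ~ occ_form c A.

Lemma notin_seq x N : ~ In x (seq 0 N) -> N <= x.
Proof. intro H. destruct (le_lt_dec N x); auto. exfalso; apply H; apply in_seq; lia. Qed.

Lemma exL_ab o e B c Gm G : ab G -> U o e true (inst B (cst c) :: Gm) G ->
  ~ occ_form c B -> ~ occ_form c G -> fresh_in c Gm -> U o e true (Ex B :: Gm) G.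
Proof.
  intros Hab H H1 H2 H3.
  apply U_exL with (L := c :: seq 0 (Nat.max (bdf B) (Nat.max (bdf G) (bdl Gm)))); auto.
  intros x Hx. assert (Hxc : x <> c) by (intro; subst; apply Hx; left; auto).
  assert (Hb : Nat.max (bdf B) (Nat.max (bdf G) (bdl Gm)) <= x) by (apply notin_seq; intro; apply Hx; right; auto).
  apply U_rename with c; auto.
  - intro Ho; apply occ_bdf in Ho; lia.
  - intro Ho; apply occ_bdf in Ho; lia.
  - intros A HA; split; [apply H3; auto|]. intro Ho; apply (occ_bdl _ _ _ HA) in Ho; lia.
Qed.

Lemma exL_adm o B c : forall G Gm,
  (U o false true (inst B (cst c) :: Gm) G /\ ~ occ_form c B /\ ~ occ_form c G /\ fresh_in c Gm) ->
  U o false true (Ex B :: Gm) G.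
Proof.
  apply push with (Pr := fun Gm G =>
    U o false true (inst B (cst c) :: Gm) G /\ ~ occ_form c B /\ ~ occ_form c G /\ fresh_in c Gm).
  - intros Gm G Hab [H1 [H2 [H3 H4]]]. eapply exL_ab; eauto.
  - intros Gm G1 G2 [H1 [H2 [H3 H4]]]. apply inv_and in H1. simpl in H3. tauto.
  - intros Gm G1 G2 [H1 [H2 [H3 H4]]]. apply inv_imp in H1. simpl in H3.
    split; [eapply U_perm; [eauto|apply perm_swap]|].
    split; auto. split; [tauto|]. intros A [HA|HA]; subst; [tauto|auto].
  - intros Gm G [H1 [H2 [H3 H4]]]. apply inv_all in H1. destruct H1 as [L HL].
    exists (c :: L). intros x Hx. split; [apply HL; intro; apply Hx; right; auto|].
    repeat split; auto. intro Ho. apply occ_inst_cst in Ho. simpl in H3.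
    destruct Ho; auto. apply Hx; left; auto.
  - intros Gm G1 G2 [H1 [H2 [H3 H4]]]. apply inv_or in H1. simpl in H3.
    destruct H1 as [H1|[H1 [H5|H5]]]; [left|right|right]; repeat split; auto; tauto.
  - intros Gm G [H1 [H2 [H3 H4]]]. apply inv_ex in H1.
    destruct H1 as [H1|[H1 _]]; [left|discriminate]. repeat split; auto.
Qed.


Lemma perm1c (a b : form) l : Permutation [a] (b :: l) -> a = b /\ l = [].
Proof.
  intro H. apply Permutation_length_1_inv in H. injection H; auto.
Qed.

Lemma perm1 (a : form) l : Permutation [a] l -> l = [a].
Proof. intro H. apply Permutation_length_1_inv in H. auto. Qed.

Lemma perm_in (A : form) l l' : Permutation l l' -> In A l' -> In A l.
Proof. intros H1 H2. apply Permutation_in with l'; auto. apply Permutation_sym; auto. Qed.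

Lemma notocc_seq c Gm G : ~ occ_seq c (Gm, [G]) -> fresh_in c Gm /\ ~ occ_form c G.
Proof.
  unfold occ_seq; simpl; intro H. split.
  - intros A HA Ho. apply H. left. apply Exists_exists; eauto.
  - intro Ho. apply H. right. constructor; auto.
Qed.

Ltac sq := unfold seq_eq in *; simpl in *;
  repeat match goal with
  | H : _ /\ _ |- _ => destruct H
  | H : Permutation [_] (_ :: _) |- _ => apply perm1c in H; destruct H; subst
  | H : Permutation [_] _ |- _ => apply perm1 in H; subst
  end.

Lemma trans o e : forall p, C_proof p -> all_seqs single_succ p ->
  (uses ROrR p -> o = true) -> (uses RExR p -> e = true) ->
  (uses ROrL p -> o = false /\ e = false) -> (uses RExL p -> e = false) ->
  forall Gm G, root p = (Gm, [G]) -> U o e true Gm G.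
Proof.
  induction p as [s|k s q IH|k s q1 IH1 q2 IH2]; intros HC HS Hor Hex Hol Hel Gm G Hr; simpl in *; subst.
  -
    destruct HC as [HT|[A [HA [H1 H2]]]]; simpl in *.
    + destruct HT as [HT|[]]; subst. apply U_top.
    + destruct H2 as [H2|[]]; subst. apply U_ax; auto.
  - destruct HC as [Hst HC]. destruct HS as [_ HS].
    assert (IH' : forall Gm G, root q = (Gm, [G]) -> U o e true Gm G).
    { apply IH; auto. }
    clear IH.
    destruct (root q) as [Gq Dq] eqn:Hq.
    assert (Hsq : single_succ (Gq, Dq)).
    { rewrite <- Hq. destruct q; simpl in *; tauto. }
    destruct Hsq as [F HF]; simpl in HF; subst Dq.
    specialize (IH' Gq F eq_refl).
    destruct k; simpl in Hst; try contradiction.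
    +
      destruct Hst as [B [G0 [D [Hp Hc]]]]. sq.
      eapply U_perm; [|apply Permutation_sym; eauto].
      apply contr_adm. eapply U_perm; eauto.
    +
      destruct Hst as [B [G0 [D [Hp Hc]]]]. sq. discriminate.
    +
      destruct Hst as [E [G0 [D [Hp Hc]]]]. sq.
      apply U_bot; auto. eapply U_perm; eauto. eapply perm_trans; eauto. apply Permutation_sym; auto.
    +
      destruct Hst as [B [E [G0 [D [[Hp|Hp] Hc]]]]]; sq;
      (eapply U_perm; [|apply Permutation_sym; eauto]).
      * apply andL1_adm. eapply U_perm; eauto.
      * apply andL2_adm. eapply U_perm; eauto.
    +
      destruct Hst as [B [E [G0 [D [[Hp|Hp] Hc]]]]]; sq.
      * apply U_orR1; auto. eapply U_perm; eauto. eapply perm_trans; eauto. apply Permutation_sym; auto.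
      * apply U_orR2; auto. eapply U_perm; eauto. eapply perm_trans; eauto. apply Permutation_sym; auto.
    +
      destruct Hst as [B [E [G0 [D [Hp Hc]]]]]; sq.
      apply U_impR. eapply U_perm; eauto. eapply perm_trans; eauto. apply perm_skip, Permutation_sym; auto.
    +
      destruct Hst as [B [t [G0 [D [Ht [Hp Hc]]]]]]; sq.
      eapply U_perm; [|apply Permutation_sym; eauto].
      apply allL_adm with t; auto. eapply U_perm; eauto.
    +
      destruct Hst as [B [t [G0 [D [Ht [Hp Hc]]]]]]; sq.
      apply U_exR with t; auto. eapply U_perm; eauto. eapply perm_trans; eauto. apply Permutation_sym; auto.
    +
      destruct Hst as [B [c [G0 [D [Hf [Hp Hc]]]]]]; sq.
      apply notocc_seq in Hf. destruct Hf as [Hf1 Hf2].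
      rewrite (Hel (or_introl eq_refl)) in *.
      eapply U_perm; [|apply Permutation_sym; eauto].
      apply exL_adm with c. split; [eapply U_perm; eauto|].
      split; [|split; auto].
      * intro Ho. apply (Hf1 (Ex B)); auto. eapply perm_in; eauto. left; auto.
      * intros A HA. apply Hf1. eapply perm_in; eauto. right; auto.
    +
      destruct Hst as [B [c [G0 [D [Hf [Hp Hc]]]]]]; sq.
      apply notocc_seq in Hf. destruct Hf as [Hf1 Hf2]. simpl in Hf2.
      assert (HU : U o e true Gm (inst B (cst c))).
      { eapply U_perm; eauto. eapply perm_trans; eauto. apply Permutation_sym; auto. }
      apply U_allR with (L := seq 0 (Nat.max (bdf B) (bdl Gm))). intros x Hx.
      apply notin_seq in Hx.
      apply U_rename_r with c; auto.
      * intro Ho; apply occ_bdf in Ho; lia.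
      * intros A HA; split; [apply Hf1; auto|]. intro Ho; apply (occ_bdl _ _ _ HA) in Ho; lia.
  - destruct HC as [Hst [HC1 HC2]]. destruct HS as [_ [HS1 HS2]].
    assert (IH1' : forall Gm G, root q1 = (Gm, [G]) -> U o e true Gm G).
    { apply IH1; auto. }
    assert (IH2' : forall Gm G, root q2 = (Gm, [G]) -> U o e true Gm G).
    { apply IH2; auto. }
    clear IH1 IH2.
    destruct (root q1) as [G1 D1] eqn:Hq1.
    destruct (root q2) as [G2 D2] eqn:Hq2.
    assert (Hsq1 : single_succ (G1, D1)).
    { rewrite <- Hq1. destruct q1; simpl in *; tauto. }
    assert (Hsq2 : single_succ (G2, D2)).
    { rewrite <- Hq2. destruct q2; simpl in *; tauto. }
    destruct Hsq1 as [F1 HF1]; destruct Hsq2 as [F2 HF2]; simpl in HF1, HF2; subst D1 D2.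
    specialize (IH1' G1 F1 eq_refl). specialize (IH2' G2 F2 eq_refl).
    destruct k; simpl in Hst; try contradiction.
    +
      destruct Hst as [B [E [G0 [D [Hp1 [Hp2 Hc]]]]]]; sq.
      destruct (Hol (or_introl eq_refl)); subst.
      eapply U_perm; [|apply Permutation_sym; eauto].
      apply orL_adm. split; [eapply U_perm; [apply IH1'|]|eapply U_perm; [apply IH2'|]]; auto.
    +
      destruct Hst as [B [E [G0 [D [Hp1 [Hp2 Hc]]]]]]; sq.
      apply U_andR; (eapply U_perm; [eauto|]); eapply perm_trans; eauto; apply Permutation_sym; auto.
    +
      destruct Hst as [B [E [G0 [D [T [Hp1 [Hp2 Hc]]]]]]]; sq. simpl in *. sq.
     
      eapply U_perm; [|apply Permutation_sym; eauto].
      injection H0; intros; subst. apply impL_adm. split; eapply U_perm; eauto.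
Qed.


Lemma bot_gen : forall G Gm, U true true false Gm Bot -> U true true false Gm G.
Proof.
  induction G as [G IH] using size_ind. intros Gm H.
  destruct G.
  - apply U_bot; auto. right; right; simpl; auto.
  - apply U_top.
  - auto.
  - apply U_andR; apply IH; simpl; auto; lia.
  - apply U_orR1; auto; apply IH; simpl; auto; lia.
  - apply U_impR; apply IH; [simpl; lia|]. apply U_weak; auto.
  - apply U_allR with []. intros; apply IH; auto. rewrite fsize_inst; simpl; lia.
  - apply U_exR with (cst 0); auto.
    + simpl; auto.
    + apply IH; auto. rewrite fsize_inst; simpl; lia.
Qed.

Lemma to_ttf o e Gm G : U o e true Gm G -> U true true false Gm G.
Proof.
  induction 1.
  - apply U_top.
  - apply U_ax; auto.
  - apply bot_gen; auto.
  - apply U_andR; auto.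
  - apply U_orR1; auto.
  - apply U_orR2; auto.
  - apply U_impR; auto.
  - eapply U_allR; eauto.
  - eapply U_exR; eauto.
  - apply U_andL1; auto.
  - apply U_andL2; auto.
  - apply U_orL; auto.
  - apply U_impL; auto.
  - eapply U_allL; eauto.
  - eapply U_exL; eauto.
  - apply U_contr; auto.
  - eapply U_perm; eauto.
Qed.

Definition Good (p : ptree) : Prop := C_proof p /\ all_seqs single_succ p /\ uniform_nodes p.

Lemma mkUn k s q : Good q -> step1 k (root q) s -> single_succ s -> uniform_ok (Some k) s -> Good (Un k s q).
Proof. unfold Good; simpl; tauto. Qed.

Lemma mkBin k s q1 q2 : Good q1 -> Good q2 -> step2 k (root q1) (root q2) s -> single_succ s ->
  uniform_ok (Some k) s -> Good (Bin k s q1 q2).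
Proof. unfold Good; simpl; tauto. Qed.

Lemma ab_uok r Gm G : ab G -> uniform_ok r (Gm, [G]).
Proof. unfold uniform_ok; simpl. intros [H|H]; subst; auto. destruct G; simpl in *; tauto. Qed.

Lemma ss Gm G : single_succ (Gm, [G]).
Proof. exists G; auto. Qed.

Lemma seq_refl s : seq_eq s s.
Proof. split; apply Permutation_refl. Qed.

Lemma pick_fresh (L : list nat) Gm A : exists c, ~ In c L /\ ~ occ_seq c (Gm, [A]).
Proof.
  set (N := Nat.max (S (list_max L)) (Nat.max (bdl Gm) (bdf A))).
  assert (HN1 : S (list_max L) <= N) by (unfold N; lia).
  assert (HN2 : bdl Gm <= N) by (unfold N; lia).
  assert (HN3 : bdf A <= N) by (unfold N; lia).
  clearbody N.
  exists N. split.
  - intro H. assert (H1 : list_max L <= list_max L) by apply le_n. apply list_max_le in H1.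
    rewrite Forall_forall in H1. specialize (H1 _ H). lia.
  - unfold occ_seq; simpl. rewrite !Exists_exists. intros [[B [HB Ho]]|[B [[HB|[]] Ho]]].
    + apply (occ_bdl _ _ _ HB) in Ho. lia.
    + subst. apply occ_bdf in Ho. lia.
Qed.

Lemma to_tree Gm G : U true true false Gm G -> forall Dl, Permutation Gm Dl ->
  exists p, Good p /\ root p = (Dl, [G]).
Proof.
  induction 1; intros Dl HP.
  - exists (Leaf (Dl, [Top])). split; auto. split; [left; simpl; auto|split; [apply ss|reflexivity]].
  - exists (Leaf (Dl, [A])). split; auto. split; [right; exists A; simpl; split; auto|split; [apply ss|apply ab_uok; auto]].
    split; auto. eapply Permutation_in; eauto.
  - destruct H as [H|H]; [discriminate|].
    destruct (IHU Dl HP) as [q [Hq Hr]].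
    exists (Un RBotR (Dl, [A]) q). split; auto. apply mkUn; auto; [|apply ss|apply ab_uok; auto].
    rewrite Hr. exists A, Dl, []. split; apply seq_refl.
  - destruct (IHU1 Dl HP) as [q1 [Hq1 Hr1]]. destruct (IHU2 Dl HP) as [q2 [Hq2 Hr2]].
    exists (Bin RAndR (Dl, [And A B]) q1 q2). split; auto. apply mkBin; auto; [|apply ss|reflexivity].
    rewrite Hr1, Hr2. exists A, B, Dl, []. repeat split; apply Permutation_refl.
  - destruct (IHU Dl HP) as [q [Hq Hr]].
    exists (Un ROrR (Dl, [Or A B]) q). split; auto. apply mkUn; auto; [|apply ss|reflexivity].
    rewrite Hr. exists A, B, Dl, []. split; [left|]; apply seq_refl.
  - destruct (IHU Dl HP) as [q [Hq Hr]].
    exists (Un ROrR (Dl, [Or A B]) q). split; auto. apply mkUn; auto; [|apply ss|reflexivity].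
    rewrite Hr. exists A, B, Dl, []. split; [right|]; apply seq_refl.
  - destruct (IHU (A :: Dl)) as [q [Hq Hr]]; [apply perm_skip; auto|].
    exists (Un RImpR (Dl, [Imp A B]) q). split; auto. apply mkUn; auto; [|apply ss|reflexivity].
    rewrite Hr. exists A, B, Dl, []. split; apply seq_refl.
  - destruct (pick_fresh L Dl (All B)) as [c [Hc1 Hc2]].
    destruct (H0 c Hc1 Dl HP) as [q [Hq Hr]].
    exists (Un RAllR (Dl, [All B]) q). split; auto. apply mkUn; auto; [|apply ss|reflexivity].
    rewrite Hr. exists B, c, Dl, []. split; auto. split; apply seq_refl.
  - destruct (IHU Dl HP) as [q [Hq Hr]].
    exists (Un RExR (Dl, [Ex B]) q). split; auto. apply mkUn; auto; [|apply ss|reflexivity].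
    rewrite Hr. exists B, t, Dl, []. split; auto. split; apply seq_refl.
  - destruct (IHU (A :: Gm)) as [q [Hq Hr]]; [auto|].
    exists (Un RAndL (Dl, [G]) q). split; auto. apply mkUn; auto; [|apply ss|apply ab_uok; auto].
    rewrite Hr. exists A, B, Gm, [G]. split; [left; apply seq_refl|split; simpl; auto]. apply Permutation_sym; auto.
  - destruct (IHU (B :: Gm)) as [q [Hq Hr]]; [auto|].
    exists (Un RAndL (Dl, [G]) q). split; auto. apply mkUn; auto; [|apply ss|apply ab_uok; auto].
    rewrite Hr. exists A, B, Gm, [G]. split; [right; apply seq_refl|split; simpl; auto]. apply Permutation_sym; auto.
  - destruct (IHU1 (A :: Gm)) as [q1 [Hq1 Hr1]]; [auto|].
    destruct (IHU2 (B :: Gm)) as [q2 [Hq2 Hr2]]; [auto|].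
    exists (Bin ROrL (Dl, [G]) q1 q2). split; auto. apply mkBin; auto; [|apply ss|apply ab_uok; auto].
    rewrite Hr1, Hr2. exists A, B, Gm, [G]. split; [apply seq_refl|split; [apply seq_refl|split; simpl; auto]].
    apply Permutation_sym; auto.
  - destruct (IHU1 Gm) as [q1 [Hq1 Hr1]]; [auto|].
    destruct (IHU2 (B :: Gm)) as [q2 [Hq2 Hr2]]; [auto|].
    exists (Bin RImpL (Dl, [G]) q1 q2). split; auto. apply mkBin; auto; [|apply ss|apply ab_uok; auto].
    rewrite Hr1, Hr2. exists A, B, Gm, [], [G]. split; [apply seq_refl|split; [apply seq_refl|split; simpl; auto]].
    apply Permutation_sym; auto.
  - destruct (IHU (inst B t :: Gm)) as [q [Hq Hr]]; [auto|].
    exists (Un RAllL (Dl, [G]) q). split; auto. apply mkUn; auto; [|apply ss|apply ab_uok; auto].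
    rewrite Hr. exists B, t, Gm, [G]. split; auto. split; [apply seq_refl|split; simpl; auto]. apply Permutation_sym; auto.
  - destruct (pick_fresh L Dl G) as [c [Hc1 Hc2]].
    destruct (H1 c Hc1 (inst B (cst c) :: Gm)) as [q [Hq Hr]]; [auto|].
    exists (Un RExL (Dl, [G]) q). split; auto. apply mkUn; auto; [|apply ss|apply ab_uok; auto].
    rewrite Hr. exists B, c, Gm, [G]. split; auto. split; [apply seq_refl|split; simpl; auto]. apply Permutation_sym; auto.
  - destruct (IHU (A :: A :: Gm)) as [q [Hq Hr]]; [auto|].
    exists (Un RContrL (Dl, [G]) q). split; auto. apply mkUn; auto; [|apply ss|apply ab_uok; auto].
    rewrite Hr. exists A, Gm, [G]. split; [apply seq_refl|split; simpl; auto]. apply Permutation_sym; auto.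
  - apply IHU. eapply perm_trans; eauto.
Qed.

Theorem part1 : forall (Gam : list form) (G : form),
     Forall wf_form Gam -> wf_form G ->
     (exists p, I_proof p /\ root p = (Gam, [G]) /\
        (~ uses ROrL p \/ (~ uses ROrR p /\ ~ uses RExR p)) /\
        (~ uses RExL p \/ ~ uses RExR p)) ->
     has_uniform_proof Gam G.
Proof.
  intros Gam G _ _ [p [[HC HS] [Hr [H1 H2]]]].
  assert (HU : exists o e, U o e true Gam G).
  { destruct H1 as [H1|[H1a H1b]].
    - destruct H2 as [H2|H2].
      + exists true, true. eapply trans; eauto; intros; try reflexivity; contradiction.
      + exists true, false. eapply trans; eauto; intros; try reflexivity; try contradiction.
    - exists false, false. eapply trans; eauto; intros; try split; try reflexivity; contradiction. }
  destruct HU as [o [e HU]]. apply to_ttf in HU.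
  destruct (to_tree _ _ HU Gam (Permutation_refl _)) as [q [[Hq1 [Hq2 Hq3]] Hr']].
  exists q. split; auto. split; auto. split; auto.
Qed.


Lemma no_proof (Inv : sequent -> Prop)
 (Hax : forall s, axiom s -> Inv s -> False)
 (H1 : forall k p c, step1 k p c -> Inv c -> Inv p)
 (H2 : forall k p1 p2 c, step2 k p1 p2 c -> Inv c -> Inv p1 \/ Inv p2) :
 forall p, C_proof p -> Inv (root p) -> False.
Proof.
  induction p as [s|k s q IH|k s q1 IH1 q2 IH2]; simpl; intros HC HI.
  - eapply Hax; eauto.
  - destruct HC as [Hs HC]. apply IH; auto. eapply H1; eauto.
  - destruct HC as [Hs [HC1 HC2]]. destruct (H2 _ _ _ _ Hs HI); [apply IH1|apply IH2]; auto.
Qed.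

Lemma Fperm {A} (P : A -> Prop) l l' : Permutation l l' -> Forall P l' -> Forall P l.
Proof.
  intros H1 H2. rewrite Forall_forall in *. intros x Hx. apply H2.
  eapply Permutation_in; eauto.
Qed.

Fixpoint qf (A : form) : Prop :=
  match A with
  | And B E | Or B E | Imp B E => qf B /\ qf E
  | All _ | Ex _ => False
  | _ => True
  end.

Fixpoint tv (v : nat -> list term -> Prop) (A : form) : Prop :=
  match A with
  | Atom p l => v p l
  | Top => True
  | Bot => False
  | And B E => tv v B /\ tv v E
  | Or B E => tv v B \/ tv v E
  | Imp B E => tv v B -> tv v E
  | All _ | Ex _ => False
  end.

Definition IV (v : nat -> list term -> Prop) (s : sequent) : Prop :=
  Forall (fun A => qf A /\ tv v A) (fst s) /\ Forall (fun A => qf A /\ ~ tv v A) (snd s).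

Lemma IV_perm v s s' : seq_eq s s' -> IV v s' -> IV v s.
Proof. intros [H1 H2] [H3 H4]. split; eapply Fperm; eauto. Qed.

Ltac fi := repeat match goal with
  | H : Forall _ (_ :: _) |- _ => inversion H; subst; clear H
  | H : Forall _ (_ ++ _) |- _ => apply Forall_app in H; destruct H
  | H : _ /\ _ |- _ => destruct H
  end.

Lemma IV_step1 v k p c : step1 k p c -> IV v c -> IV v p.
Proof.
  intros Hs Hc. destruct k; simpl in Hs; try contradiction.
  - destruct Hs as [B [G [D [Hp Hcc]]]]. apply (IV_perm _ _ _ Hp).
    apply (IV_perm _ _ _ (conj (Permutation_sym (proj1 Hcc)) (Permutation_sym (proj2 Hcc)))) in Hc.
    destruct Hc as [Ha Hb]; simpl in *; fi. split; simpl; repeat constructor; simpl in *; try tauto.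
  - destruct Hs as [B [G [D [Hp Hcc]]]]. apply (IV_perm _ _ _ Hp).
    apply (IV_perm _ _ _ (conj (Permutation_sym (proj1 Hcc)) (Permutation_sym (proj2 Hcc)))) in Hc.
    destruct Hc as [Ha Hb]; simpl in *; fi. split; simpl; repeat constructor; simpl in *; try tauto.
  - destruct Hs as [E [G [D [Hp Hcc]]]]. apply (IV_perm _ _ _ Hp).
    apply (IV_perm _ _ _ (conj (Permutation_sym (proj1 Hcc)) (Permutation_sym (proj2 Hcc)))) in Hc.
    destruct Hc as [Ha Hb]; simpl in *; fi. split; simpl; repeat constructor; simpl in *; try tauto.
  - destruct Hs as [B [E [G [D [[Hp|Hp] Hcc]]]]]; apply (IV_perm _ _ _ Hp);
    apply (IV_perm _ _ _ (conj (Permutation_sym (proj1 Hcc)) (Permutation_sym (proj2 Hcc)))) in Hc;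
    destruct Hc as [Ha Hb]; simpl in *; fi; split; simpl; repeat constructor; simpl in *; try tauto.
  - destruct Hs as [B [E [G [D [[Hp|Hp] Hcc]]]]]; apply (IV_perm _ _ _ Hp);
    apply (IV_perm _ _ _ (conj (Permutation_sym (proj1 Hcc)) (Permutation_sym (proj2 Hcc)))) in Hc;
    destruct Hc as [Ha Hb]; simpl in *; fi; split; simpl; repeat constructor; simpl in *; try tauto.
  - destruct Hs as [B [E [G [D [Hp Hcc]]]]]. apply (IV_perm _ _ _ Hp).
    apply (IV_perm _ _ _ (conj (Permutation_sym (proj1 Hcc)) (Permutation_sym (proj2 Hcc)))) in Hc.
    destruct Hc as [Ha Hb]; simpl in *; fi. split; simpl; repeat constructor; simpl in *; try tauto.
  - destruct Hs as [B [t [G [D [_ [Hp Hcc]]]]]].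
    apply (IV_perm _ _ _ (conj (Permutation_sym (proj1 Hcc)) (Permutation_sym (proj2 Hcc)))) in Hc.
    destruct Hc as [Ha Hb]; simpl in *; fi. contradiction.
  - destruct Hs as [B [t [G [D [_ [Hp Hcc]]]]]].
    apply (IV_perm _ _ _ (conj (Permutation_sym (proj1 Hcc)) (Permutation_sym (proj2 Hcc)))) in Hc.
    destruct Hc as [Ha Hb]; simpl in *; fi. contradiction.
  - destruct Hs as [B [t [G [D [_ [Hp Hcc]]]]]].
    apply (IV_perm _ _ _ (conj (Permutation_sym (proj1 Hcc)) (Permutation_sym (proj2 Hcc)))) in Hc.
    destruct Hc as [Ha Hb]; simpl in *; fi. contradiction.
  - destruct Hs as [B [t [G [D [_ [Hp Hcc]]]]]].
    apply (IV_perm _ _ _ (conj (Permutation_sym (proj1 Hcc)) (Permutation_sym (proj2 Hcc)))) in Hc.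
    destruct Hc as [Ha Hb]; simpl in *; fi. contradiction.
Qed.

Lemma IV_step2 v k p1 p2 c : step2 k p1 p2 c -> IV v c -> IV v p1 \/ IV v p2.
Proof.
  intros Hs Hc. destruct k; simpl in Hs; try contradiction.
  - destruct Hs as [B [E [G [D [Hp1 [Hp2 Hcc]]]]]].
    apply (IV_perm _ _ _ (conj (Permutation_sym (proj1 Hcc)) (Permutation_sym (proj2 Hcc)))) in Hc.
    destruct Hc as [Ha Hb]; simpl in *; fi. simpl in H0.
    destruct H0;
    [left; apply (IV_perm _ _ _ Hp1)|right; apply (IV_perm _ _ _ Hp2)]; split; simpl; repeat constructor; simpl in *; try tauto.
  - destruct Hs as [B [E [G [D [Hp1 [Hp2 Hcc]]]]]].
    apply (IV_perm _ _ _ (conj (Permutation_sym (proj1 Hcc)) (Permutation_sym (proj2 Hcc)))) in Hc.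
    destruct Hc as [Ha Hb]; simpl in *; fi.
    destruct (classic (tv v B)).
    + right; apply (IV_perm _ _ _ Hp2); split; simpl; repeat constructor; simpl in *; try tauto.
    + left; apply (IV_perm _ _ _ Hp1); split; simpl; repeat constructor; simpl in *; try tauto.
  - destruct Hs as [B [E [G [D [T [Hp1 [Hp2 Hcc]]]]]]].
    apply (IV_perm _ _ _ (conj (Permutation_sym (proj1 Hcc)) (Permutation_sym (proj2 Hcc)))) in Hc.
    destruct Hc as [Ha Hb]; simpl in *; fi.
    destruct (classic (tv v B)).
    + right; apply (IV_perm _ _ _ Hp2); split; simpl; repeat constructor; simpl in *; try tauto.
    + left; apply (IV_perm _ _ _ Hp1); split; simpl; repeat constructor; simpl in *; try tauto.
Qed.

Lemma IV_ax v s : axiom s -> IV v s -> False.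
Proof.
  intros [H|[A [_ [H1 H2]]]] [Ha Hb]; rewrite Forall_forall in *.
  - destruct (Hb _ H); simpl in *; auto.
  - destruct (Ha _ H1); destruct (Hb _ H2); auto.
Qed.

Lemma IV_noproof v p : C_proof p -> IV v (root p) -> False.
Proof.
  apply no_proof; [apply IV_ax|apply IV_step1|apply IV_step2].
Qed.


Definition PX : form := Ex (Atom 0 [TVar 0]).

Definition I2 (t : term) (s : sequent) : Prop :=
  Forall (fun A => A = PX \/ exists u, A = Atom 0 [u]) (fst s) /\
  Forall (fun A => A = Bot \/ A = Atom 0 [t]) (snd s) /\
  (In (Atom 0 [t]) (snd s) -> ~ In (Atom 0 [t]) (fst s)).

Lemma I2_perm t s s' : seq_eq s s' -> I2 t s' -> I2 t s.
Proof.
  intros [H1 H2] [H3 [H4 H5]]. split; [eapply Fperm; eauto|split; [eapply Fperm; eauto|]].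
  intros Hi Hi'. apply H5; eapply Permutation_in; eauto.
Qed.

Ltac c2 Hcc Hc := apply (I2_perm _ _ _ (conj (Permutation_sym (proj1 Hcc)) (Permutation_sym (proj2 Hcc)))) in Hc;
  destruct Hc as [Ha [Hb Hx]]; simpl in *.

Ltac bad := match goal with
  | H : Forall _ (_ :: _) |- _ => inversion H; subst; clear H;
      match goal with H' : _ \/ _ |- _ => destruct H' as [H'|H'];
        [discriminate H'| try discriminate H'; destruct H' as [? H']; discriminate H'] end
  end.

Lemma I2_step1 t k p c : step1 k p c -> I2 t c -> I2 t p.
Proof.
  intros Hs Hc. destruct k; simpl in Hs; try contradiction.
  - destruct Hs as [B [G [D [Hp Hcc]]]]. apply (I2_perm _ _ _ Hp). c2 Hcc Hc.
    split; [apply Forall_cons; auto; inversion Ha; auto|split; auto].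
    simpl. intros Hi [Hi'|Hi']; apply Hx; simpl; auto.
  - destruct Hs as [B [G [D [Hp Hcc]]]]. apply (I2_perm _ _ _ Hp). c2 Hcc Hc.
    split; auto. split; [apply Forall_cons; auto; inversion Hb; auto|].
    simpl. intros [Hi|[Hi|Hi]]; apply Hx; simpl; auto.
  - destruct Hs as [E [G [D [Hp Hcc]]]]. apply (I2_perm _ _ _ Hp). c2 Hcc Hc.
    inversion Hb; subst. split; auto. split; [apply Forall_cons; auto|].
    simpl. intros [Hi|Hi]; [discriminate|]. apply Hx; simpl; auto.
  - destruct Hs as [B [E [G [D [_ Hcc]]]]]. c2 Hcc Hc. bad.
  - destruct Hs as [B [E [G [D [_ Hcc]]]]]. c2 Hcc Hc. bad.
  - destruct Hs as [B [E [G [D [_ Hcc]]]]]. c2 Hcc Hc. bad.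
  - destruct Hs as [B [u [G [D [_ [_ Hcc]]]]]]. c2 Hcc Hc. bad.
  - destruct Hs as [B [u [G [D [_ [_ Hcc]]]]]]. c2 Hcc Hc. bad.
  - destruct Hs as [B [x [G [D [Hf [Hp Hcc]]]]]]. apply (I2_perm _ _ _ Hp).
    assert (Hc' := Hc). c2 Hcc Hc.
    inversion Ha; subst.
    match goal with H' : _ \/ _ |- _ => destruct H' as [H'|[? H']]; [|discriminate H'] end.
    unfold PX in H1. injection H1; intros; subst.
    split; [constructor; auto; right; eexists; reflexivity|split; auto].
    simpl. intros Hi [Hi'|Hi'].
    + injection Hi'; intros; subst. apply Hf. right. apply Exists_exists.
      exists (Atom 0 [TFun x []]). split.
      * eapply Permutation_in; [apply Permutation_sym, (proj2 Hcc)|]; auto.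
      * simpl; auto.
    + apply Hx; simpl; auto.
  - destruct Hs as [B [u [G [D [_ [_ Hcc]]]]]]. c2 Hcc Hc. bad.
Qed.

Lemma I2_step2 t k p1 p2 c : step2 k p1 p2 c -> I2 t c -> I2 t p1 \/ I2 t p2.
Proof.
  intros Hs Hc. destruct k; simpl in Hs; try contradiction.
  - destruct Hs as [B [E [G [D [_ [_ Hcc]]]]]]. c2 Hcc Hc. bad.
  - destruct Hs as [B [E [G [D [_ [_ Hcc]]]]]]. c2 Hcc Hc. bad.
  - destruct Hs as [B [E [G [D [T [_ [_ Hcc]]]]]]]. c2 Hcc Hc. bad.
Qed.

Lemma I2_ax t s : axiom s -> I2 t s -> False.
Proof.
  intros [H|[A [HA [H1 H2]]]] [Ha [Hb Hx]]; rewrite Forall_forall in *.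
  - destruct (Hb _ H); discriminate.
  - destruct (Hb _ H2); subst.
    + destruct (Ha _ H1) as [H3|[u H3]]; discriminate.
    + apply Hx; auto.
Qed.

Lemma I2_noproof t p : C_proof p -> I2 t (root p) -> False.
Proof.
  apply no_proof; [apply I2_ax|apply I2_step1|apply I2_step2].
Qed.

Lemma uroot_ex p Gm B : O_proof p -> root p = (Gm, [Ex B]) ->
  exists q, step1 RExR (root q) (Gm, [Ex B]) /\ C_proof q.
Proof.
  intros [[HC HS] HU] Hr. destruct p as [s|k s q|k s q1 q2]; simpl in *; subst.
  - unfold uniform_ok in HU; simpl in HU; discriminate.
  - destruct HU as [HU _]. unfold uniform_ok in HU; simpl in HU. injection HU; intros; subst.
    exists q; tauto.
  - destruct HU as [HU _]. unfold uniform_ok in HU; simpl in HU. injection HU; intros; subst.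
    destruct HC as [Hst _]; simpl in Hst; contradiction.
Qed.

Lemma uroot_or p Gm A B : O_proof p -> root p = (Gm, [Or A B]) ->
  exists q, step1 ROrR (root q) (Gm, [Or A B]) /\ C_proof q.
Proof.
  intros [[HC HS] HU] Hr. destruct p as [s|k s q|k s q1 q2]; simpl in *; subst.
  - unfold uniform_ok in HU; simpl in HU; discriminate.
  - destruct HU as [HU _]. unfold uniform_ok in HU; simpl in HU. injection HU; intros; subst.
    exists q; tauto.
  - destruct HU as [HU _]. unfold uniform_ok in HU; simpl in HU. injection HU; intros; subst.
    destruct HC as [Hst _]; simpl in Hst; contradiction.
Qed.


Lemma sref s : seq_eq s s.
Proof. split; apply Permutation_refl. Qed.

Lemma ax_atom A : is_atom A -> axiom ([A], [A]).
Proof. intro H. right. exists A. simpl; auto. Qed.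

Lemma perm_single_ex (B B' : form) D : Permutation [Ex B] (Ex B' :: D) -> B = B' /\ D = [].
Proof. intro H. apply Permutation_length_1_inv in H. injection H; auto. Qed.

Definition P1 := Atom 0 [cst 1].
Definition P2 := Atom 0 [cst 2].

Lemma w1 : tight_witness ROrL RExR.
Proof.
  exists [Or P1 P2], PX. split; [solve [repeat constructor]|split; [solve [repeat constructor]|split]].
  - unfold has_I_proof_using. exists (Bin ROrL ([Or P1 P2], [PX]) (Un RExR ([P1], [PX]) (Leaf ([P1], [P1])))
                                          (Un RExR ([P2], [PX]) (Leaf ([P2], [P2])))).
    split; [split|split; [reflexivity|split; simpl; auto 10]].
    + simpl. split; [exists P1, P2, [], [PX]; repeat split; apply Permutation_refl|].
      split; split; try (apply ax_atom; simpl; auto);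
      [exists (Atom 0 [TVar 0]), (cst 1), [P1], []|exists (Atom 0 [TVar 0]), (cst 2), [P2], []];
      (split; [simpl; auto|split; apply sref]).
    + simpl. repeat split; eexists; reflexivity.
  - intros [p [Hp Hr]]. destruct (uroot_ex _ _ _ Hp Hr) as [q [Hs HC]].
    destruct Hs as [B [t [G0 [D [Ht [Hq Hc]]]]]].
    destruct Hc as [Hc1 Hc2]; simpl in Hc1, Hc2. apply perm_single_ex in Hc2. destruct Hc2; subst.
    apply (IV_noproof (fun n l => l <> [t]) q HC).
    apply (IV_perm _ _ _ Hq). split; simpl.
    + eapply Fperm; [apply Permutation_sym; eauto|]. constructor; auto. simpl. split; auto.
      destruct (classic (t = cst 1)); subst; [right|left]; intro Hx; injection Hx; intros; subst; auto.
      discriminate.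
    + constructor; auto. simpl. split; auto.
Qed.

Definition Pa := Atom 0 [].
Definition Qa := Atom 1 [].

Lemma w2 : tight_witness ROrL ROrR.
Proof.
  exists [Or Pa Qa], (Or Qa Pa). split; [solve [repeat constructor]|split; [solve [repeat constructor]|split]].
  - unfold has_I_proof_using. exists (Bin ROrL ([Or Pa Qa], [Or Qa Pa]) (Un ROrR ([Pa], [Or Qa Pa]) (Leaf ([Pa], [Pa])))
                                          (Un ROrR ([Qa], [Or Qa Pa]) (Leaf ([Qa], [Qa])))).
    split; [split|split; [reflexivity|split; simpl; auto 10]].
    + simpl. split; [exists Pa, Qa, [], [Or Qa Pa]; repeat split; apply Permutation_refl|].
      split; split; try (apply ax_atom; simpl; auto);
      [exists Qa, Pa, [Pa], []|exists Qa, Pa, [Qa], []]; (split; [|apply sref]); [right|left]; apply sref.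
    + simpl. repeat split; eexists; reflexivity.
  - intros [p [Hp Hr]]. destruct (uroot_or _ _ _ _ Hp Hr) as [q [Hs HC]].
    destruct Hs as [B [E [G0 [D [Hq Hc]]]]].
    destruct Hc as [Hc1 Hc2]; simpl in Hc1, Hc2.
    apply Permutation_length_1_inv in Hc2. injection Hc2; intros; subst.
    destruct Hq as [Hq|Hq].
    + apply (IV_noproof (fun n l => n = 0) q HC).
      apply (IV_perm _ _ _ Hq). split; simpl.
      * eapply Fperm; [apply Permutation_sym; eauto|]. constructor; auto. simpl. auto.
      * constructor; auto. simpl. split; auto.
    + apply (IV_noproof (fun n l => n = 1) q HC).
      apply (IV_perm _ _ _ Hq). split; simpl.
      * eapply Fperm; [apply Permutation_sym; eauto|]. constructor; auto. simpl. auto.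
      * constructor; auto. simpl. split; auto.
Qed.

Lemma w3 : tight_witness RExL RExR.
Proof.
  exists [PX], PX. split; [solve [repeat constructor]|split; [solve [repeat constructor]|split]].
  - unfold has_I_proof_using. exists (Un RExL ([PX], [PX]) (Un RExR ([Atom 0 [cst 0]], [PX]) (Leaf ([Atom 0 [cst 0]], [Atom 0 [cst 0]])))).
    split; [split|split; [reflexivity|split; simpl; auto 10]].
    + simpl. split; [|split; [|apply ax_atom; simpl; auto]].
      * exists (Atom 0 [TVar 0]), 0, [], [PX]. split; [|split; apply sref].
        unfold occ_seq; simpl. intros [H|H]; inversion H; subst; simpl in *; try tauto;
          match goal with H' : Exists _ [] |- _ => inversion H' end.
      * exists (Atom 0 [TVar 0]), (cst 0), [Atom 0 [cst 0]], []. split; [simpl; auto|split; apply sref].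
    + simpl. repeat split; eexists; reflexivity.
  - intros [p [Hp Hr]]. destruct (uroot_ex _ _ _ Hp Hr) as [q [Hs HC]].
    destruct Hs as [B [t [G0 [D [Ht [Hq Hc]]]]]].
    destruct Hc as [Hc1 Hc2]; simpl in Hc1, Hc2. apply perm_single_ex in Hc2. destruct Hc2; subst.
    apply (I2_noproof t q HC).
    apply (I2_perm _ _ _ Hq). split; [|split]; simpl.
    + eapply Fperm; [apply Permutation_sym; eauto|]. constructor; auto.
    + constructor; auto.
    + intros _ Hi. eapply Permutation_in in Hi; [|apply Permutation_sym, Hc1]. destruct Hi as [Hi|[]]. discriminate.
Qed.


Theorem theorem8 :
  (forall (Gam : list form) (G : form),
     Forall wf_form Gam -> wf_form G ->
     (exists p, I_proof p /\ root p = (Gam, [G]) /\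
        (~ uses ROrL p \/ (~ uses ROrR p /\ ~ uses RExR p)) /\
        (~ uses RExL p \/ ~ uses RExR p)) ->
     has_uniform_proof Gam G)
  /\ tight_witness ROrL RExR
  /\ tight_witness ROrL ROrR
  /\ tight_witness RExL RExR.
Proof.
  split; [exact part1|split; [exact w1|split; [exact w2|exact w3]]].
Qed.
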